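(* Let $s\ge1$. There is a three-layer Boolean threshold network with layer sizes $s$, $\lceil\log_2 s\rceil$, $s$ which maps $\mathbf{h}^i[s]$ to $\mathbf{h}^i[s]$ for every $i=0,\ldots,s-1$.
   Context: For integers $0\le i<s$, the step vector $\mathbf{h}^i[s]\in\{0,1\}^s$ has $\mathbf{h}^i[s]_j=1$ for $0\le j\le i$ and $0$ for $i<j<s$. A Boolean threshold function is a map $\{0,1\}^h\to\{0,1\}$, $\mathbf{u}\mapsto[\mathbf{w}\cdot\mathbf{u}\ge\theta]$ (value $1$ iff $\mathbf{w}\cdot\mathbf{u}\ge\theta$) with $\mathbf{w}\in\mathbb{Z}^h,\theta\in\mathbb{Z}$. A three-layer Boolean threshold network with layer sizes $p,q,p$ computes $\mathbf{u}\mapsto\mathbf{g}(\mathbf{f}(\mathbf{u}))$ where $\mathbf{f}:\{0,1\}^p\to\{0,1\}^q$ and $\mathbf{g}:\{0,1\}^q\to\{0,1\}^p$ have all coordinates Boolean threshold functions. *)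

(* Defs.v *)
From mathcomp Require Import all_boot all_order all_algebra.
Set Implicit Arguments. Unset Strict Implicit. Unset Printing Implicit Defensive.
Import Order.TTheory GRing.Theory Num.Theory.
Local Open Scope ring_scope.

Definition step_vec (s i : nat) : 'I_s -> bool := fun j => (j <= i)%N.
Arguments step_vec : clear implicits.

Definition is_threshold (h : nat) (f : ('I_h -> bool) -> bool) : Prop :=
  exists (w : 'I_h -> int) (theta : int),
    forall u : 'I_h -> bool,
      f u = (theta <= \sum_(j < h) w j * (u j)%:R).

Definition threshold_layer (p q : nat) (f : ('I_p -> bool) -> ('I_q -> bool)) : Prop :=
  forall k : 'I_q, is_threshold (fun u => f u k).

Definition ceil_log2 (s : nat) : nat := up_log 2 s.

(* Main.v *)
Require Import Defs.
From mathcomp Require Import all_boot all_order all_algebra.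
From mathcomp Require Import zify.
From Stdlib Require Import FunctionalExtensionality.
Set Implicit Arguments. Unset Strict Implicit. Unset Printing Implicit Defensive.
Import Order.TTheory GRing.Theory Num.Theory.
Local Open Scope ring_scope.

Lemma binsum (e i : nat) : (i < 2 ^ e)%N ->
  (\sum_(k < e) 2 ^ k * odd (i %/ 2 ^ k))%N = i.
Proof.
elim: e i => [|e IH] i Hi.
  by rewrite big_ord0; move: Hi; rewrite expn0; case: i.
rewrite big_ord_recl /= expn0 divn1 mul1n.
have H2 : (i./2 < 2 ^ e)%N.
  move: Hi; rewrite expnS -divn2 => Hi; rewrite ltn_divLR //; lia.
rewrite -[X in (_ = X)%N](odd_double_half i); congr (_ + _)%N.
rewrite -(IH _ H2) -muln2 big_distrl /=; apply: eq_big => // k _.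
rewrite /bump /= expnS divnMA divn2; lia.
Qed.

Definition bitz (k j : nat) : int := (odd (j %/ 2 ^ k))%:R.
Definition wz (k j : nat) : int :=
  if j is j'.+1 then bitz k j'.+1 - bitz k j' else bitz k 0.

Lemma tele (k n : nat) : \sum_(j < n.+1) wz k j = bitz k n.
Proof.
elim: n => [|n IH]; first by rewrite big_ord1.
by rewrite big_ord_recr /= IH addrC subrK.
Qed.

Lemma stepsum (s i : nat) (w : nat -> int) : (i < s)%N ->
  \sum_(j < s) w j * (step_vec s i j)%:R = \sum_(j < i.+1) w j.
Proof.
move=> Hi.
rewrite (big_ord_widen s (fun j => w j) Hi) [RHS]big_mkcond /=.
apply: eq_bigr => j _; rewrite /step_vec ltnS.
by case: (j <= i)%N; rewrite ?mulr1 ?mulr0.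
Qed.

Theorem lemma20 (s : nat) : (1 <= s)%N ->
  exists (f : ('I_s -> bool) -> ('I_(ceil_log2 s) -> bool))
         (g : ('I_(ceil_log2 s) -> bool) -> ('I_s -> bool)),
    threshold_layer f /\ threshold_layer g /\
    forall i : nat, (i < s)%N -> g (f (step_vec s i)) = step_vec s i.
Proof.
move=> s1.
set e := ceil_log2 s.
have Hse : (s <= 2 ^ e)%N by apply: up_logP.
exists (fun u (k : 'I_e) => 1 <= \sum_(j < s) wz k j * (u j)%:R).
exists (fun b (j : 'I_s) => (j%:Z <= \sum_(k < e) (2 ^ k)%:R * (b k)%:R)).
split; first by move=> k; exists (fun j => wz k j), 1.
split; first by move=> j; exists (fun k => (2 ^ k)%:R), j%:Z.
move=> i Hi; apply: functional_extensionality => j /=.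
have Hb : forall k : 'I_e, (1 <= \sum_(j0 < s) wz k j0 * (step_vec s i j0)%:R)
    = odd (i %/ 2 ^ k).
  by move=> k; rewrite stepsum // tele /bitz; case: odd.
under eq_bigr => k _ do rewrite Hb.
have -> : \sum_(k < e) (2 ^ k)%:R * (odd (i %/ 2 ^ k))%:R = (i%:Z :> int).
  rewrite -[X in _ = X%:Z](binsum (i := i) (e := e)); last by lia.
  by rewrite -[RHS]natz natr_sum; apply: eq_bigr => k _; rewrite natrM.
by rewrite lez_nat /step_vec.
Qed.
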